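(* Let $\{a_n\}_{n\ge1}$ be a monotone decreasing sequence of positive real numbers. Suppose that for $n\ge 2$ \[ \frac{a_{2n}}{a_n}=\frac12-\frac{\beta}{\ln n}+\frac{\gamma(n)}{(\ln n)^p}, \] where $p>1$, $\beta$ is a real constant independent of $n$, and $\gamma(n)$ is a bounded function of $n$. Then: (i) if $\beta>\frac{\ln2}{2}$, then $\sum_{n=1}^\infty a_n$ converges; (ii) if $\beta\le\frac{\ln2}{2}$, then $\sum_{n=1}^\infty a_n$ diverges.
   Context: Here $\ln$ denotes the natural logarithm. *)

(* Defs.v *)
From Stdlib Require Import Reals.
From Coquelicot Require Import Coquelicot.
Open Scope R_scope.

Definition series_from1_converges (a : nat -> R) : Prop :=
  ex_series (fun n => a (S n)).

(* Main.v *)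
Require Import Defs.
From Stdlib Require Import Reals Lra Lia.
From Coquelicot Require Import Coquelicot.
Open Scope R_scope.

Fixpoint P (f : nat -> R) (n : nat) : R :=
  match n with O => 0 | S m => P f m + f (S m) end.
Fixpoint Q (f : nat -> R) (m l : nat) : R :=
  match l with O => 0 | S l' => Q f m l' + f (m + l')%nat end.

Lemma sumn_S (u : nat -> R) n : @eq R (sum_n u (S n)) (sum_n u n + u (S n)).
Proof. rewrite sum_Sn. reflexivity. Qed.
Lemma sumn_O (u : nat -> R) : @eq R (sum_n u 0) (u 0%nat).
Proof. apply sum_O. Qed.

Lemma P_sum (f : nat -> R) n : @eq R (sum_n (fun i => f (S i)) n) (P f (S n)).
Proof.
  induction n.
  - rewrite sumn_O. simpl. ring.
  - rewrite sumn_S, IHn. simpl. ring.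
Qed.

Lemma P_add (f : nat -> R) m l : P f (m + l) = P f m + Q f (S m) l.
Proof.
  induction l.
  - rewrite Nat.add_0_r. simpl. ring.
  - rewrite Nat.add_succ_r. simpl. rewrite IHl. ring.
Qed.

Lemma Q_le (f : nat -> R) m l c : (forall j, (j < l)%nat -> f (m + j)%nat <= c) -> Q f m l <= INR l * c.
Proof.
  induction l; intros H.
  - simpl. lra.
  - simpl Q. rewrite S_INR.
    assert (Q f m l <= INR l * c) by (apply IHl; intros; apply H; lia).
    assert (f (m + l)%nat <= c) by (apply H; lia). lra.
Qed.

Lemma Q_ge (f : nat -> R) m l c : (forall j, (j < l)%nat -> c <= f (m + j)%nat) -> INR l * c <= Q f m l.
Proof.
  induction l; intros H.
  - simpl. lra.
  - simpl Q. rewrite S_INR.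
    assert (INR l * c <= Q f m l) by (apply IHl; intros; apply H; lia).
    assert (c <= f (m + l)%nat) by (apply H; lia). lra.
Qed.

Lemma dec_mono (f : nat -> R) : (forall n, (1 <= n)%nat -> f (S n) <= f n) ->
  forall i j, (1 <= i)%nat -> (i <= j)%nat -> f j <= f i.
Proof.
  intros Hd i j Hi Hij. induction Hij.
  - lra.
  - specialize (Hd m ltac:(lia)). lra.
Qed.

Lemma P_mono (f : nat -> R) : (forall n, (1 <= n)%nat -> 0 <= f n) -> forall m d, P f m <= P f (m + d).
Proof.
  intros Hp m d. rewrite P_add.
  assert (INR d * 0 <= Q f (S m) d) by (apply Q_ge; intros; apply Hp; lia). lra.
Qed.

Lemma pow2_ge1 k : (1 <= 2 ^ k)%nat.
Proof. induction k; simpl; lia. Qed.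

Lemma INR_pow2 k : INR (2 ^ k) = 2 ^ k.
Proof. rewrite pow_INR. replace (INR 2) with 2 by (simpl; ring). reflexivity. Qed.

Lemma cond_up (f : nat -> R) : (forall n, (1 <= n)%nat -> 0 <= f n) ->
  (forall n, (1 <= n)%nat -> f (S n) <= f n) ->
  forall K, P f (2 ^ S K - 1) <= sum_n (fun k => 2 ^ k * f (2 ^ k)%nat) K.
Proof.
  intros Hp Hd K. induction K.
  - rewrite sumn_O. simpl. lra.
  - rewrite sumn_S.
    set (t := (2 ^ S K)%nat) in *.
    assert (Ht : (1 <= t)%nat) by apply pow2_ge1.
    assert (E : (2 ^ S (S K) - 1 = (t - 1) + t)%nat).
    { change (2 ^ S (S K))%nat with (2 * t)%nat. lia. }
    rewrite E, P_add. replace (S (t - 1)) with t by lia.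
    assert (Q f t t <= INR t * f t).
    { apply Q_le. intros j Hj. apply dec_mono; auto; lia. }
    unfold t in H. rewrite INR_pow2 in H. fold t in H. lra.
Qed.

Lemma cond_down (f : nat -> R) : (forall n, (1 <= n)%nat -> 0 <= f n) ->
  (forall n, (1 <= n)%nat -> f (S n) <= f n) ->
  forall K, sum_n (fun k => 2 ^ k * f (2 ^ S k)%nat) K <= P f (2 ^ S K).
Proof.
  intros Hp Hd K. induction K.
  - rewrite sumn_O. simpl. assert (0 <= f 1%nat) by (apply Hp; lia). lra.
  - rewrite sumn_S.
    set (t := (2 ^ S K)%nat) in *.
    assert (Ht : (1 <= t)%nat) by apply pow2_ge1.
    assert (E : (2 ^ S (S K) = t + t)%nat).
    { change (2 ^ S (S K))%nat with (2 * t)%nat. lia. }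
    rewrite E, P_add.
    assert (INR t * f (t + t)%nat <= Q f (S t) t).
    { apply Q_ge. intros j Hj. apply dec_mono; auto; lia. }
    unfold t in H. rewrite INR_pow2 in H. fold t in H. lra.
Qed.

Lemma sum_mono (u : nat -> R) N : (forall k, (N < k)%nat -> 0 <= u k) ->
  forall d, sum_n u N <= sum_n u (N + d).
Proof.
  intros Hu d. induction d.
  - rewrite Nat.add_0_r; lra.
  - rewrite Nat.add_succ_r, sumn_S. assert (0 <= u (S (N + d))) by (apply Hu; lia). lra.
Qed.

Lemma bound_of_ex (u : nat -> R) : (forall k, 0 <= u k) -> ex_series u ->
  exists L, forall N, sum_n u N <= L.
Proof.
  intros Hu [l H]. exists l. apply is_lim_seq_incr_compare.
  - exact H.
  - intros n. rewrite sumn_S. specialize (Hu (S n)). lra.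
Qed.

Lemma ex_of_bound (u : nat -> R) L : (forall k, 0 <= u k) -> (forall N, sum_n u N <= L) ->
  ex_series u.
Proof.
  intros Hu HL. destruct (ex_finite_lim_seq_incr (sum_n u) L) as [l Hl].
  - intros n. rewrite sumn_S. specialize (Hu (S n)). lra.
  - exact HL.
  - exists l. exact Hl.
Qed.

Lemma sum_shift (u : nat -> R) K : @eq R (sum_n (fun k => u (S k)) K) (sum_n u (S K) - u O).
Proof.
  induction K.
  - rewrite sumn_O, sumn_S, sumn_O. ring.
  - rewrite sumn_S, IHK, (sumn_S u (S K)). ring.
Qed.

Lemma raabe (b : nat -> R) s K : (forall k, 0 < b k) -> 1 < s -> (1 <= K)%nat ->
  (forall k, (K <= k)%nat -> b (S k) <= b k * (1 - s / INR k)) -> ex_series b.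
Proof.
  intros Hb Hs HK Hr.
  assert (step : forall k, (K <= k)%nat -> INR k * b (S k) <= b k * (INR k - s)).
  { intros k Hk. specialize (Hr k Hk).
    assert (Hk0 : 0 < INR k) by (apply lt_0_INR; lia).
    assert (E : b k * (1 - s / INR k) * INR k = b k * (INR k - s)) by (field; lra).
    rewrite <- E. rewrite Rmult_comm. apply Rmult_le_compat_r; lra. }
  assert (inv : forall d, (s - 1) * (sum_n b (K + d) - sum_n b K) + INR (K + d) * b (S (K + d))
                          <= (INR K - 1) * b K).
  { induction d.
    - rewrite Nat.add_0_r. specialize (step K (le_n K)). specialize (Hb K). nra.
    - rewrite Nat.add_succ_r, sumn_S, S_INR.
      specialize (step (S (K + d)) ltac:(lia)). rewrite S_INR in step. lra. }
  apply ex_of_bound with (L := sum_n b K + INR K * b K / (s - 1)).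
  - intros k; specialize (Hb k); lra.
  - intros N.
    assert (H0 : 0 <= INR K * b K / (s - 1)).
    { apply Rdiv_le_0_compat; [apply Rmult_le_pos; [apply pos_INR | left; apply Hb] | lra]. }
    destruct (Nat.le_gt_cases K N) as [HN | HN].
    + specialize (inv (N - K)%nat). replace (K + (N - K))%nat with N in inv by lia.
      assert (0 <= INR N * b (S N)) by (apply Rmult_le_pos; [apply pos_INR | left; apply Hb]).
      assert (Hk := Hb K).
      assert ((s - 1) * (sum_n b N - sum_n b K) <= INR K * b K) by lra.
      assert (sum_n b N - sum_n b K <= INR K * b K / (s - 1)).
      { apply Rmult_le_reg_l with (s - 1). lra.
        replace ((s - 1) * (INR K * b K / (s - 1))) with (INR K * b K) by (field; lra). lra. }
      lra.
    + assert (sum_n b N <= sum_n b (N + (K - N))) by (apply sum_mono; intros; left; apply Hb).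
      replace (N + (K - N))%nat with K in H by lia. lra.
Qed.

Lemma gauss_div (b x : nat -> R) K : (forall k, 0 < b k) -> (1 <= K)%nat ->
  (forall k, (1 <= k)%nat -> 0 <= x k) -> ex_series x ->
  (forall k, (K <= k)%nat -> INR k * b k * (1 - x k) <= INR (S k) * b (S k)) ->
  exists C K1, 0 < C /\ (1 <= K1)%nat /\ forall N, (K1 <= N)%nat -> C / INR N <= b N.
Proof.
  intros Hb HK Hx Hex Hr.
  destruct (Cauchy_ex_series x Hex (mkposreal (1/2) ltac:(lra))) as [N0 HN0].
  set (K0 := Nat.max N0 K).
  set (K1 := S K0).
  set (w := fun k => INR k * b k).
  set (Sd := fun d => sum_n x (K0 + d) - sum_n x K0).
  assert (Sb : forall d, 0 <= Sd d < 1/2).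
  { intros d. split.
    - unfold Sd. assert (sum_n x K0 <= sum_n x (K0 + d)).
      { apply sum_mono. intros; apply Hx; lia. } lra.
    - specialize (HN0 (S K0) (K0 + d)%nat ltac:(unfold K0; lia) ltac:(unfold K0; lia)).
      pose proof (sum_n_m_sum_n (G:=R_AbelianGroup) x K0 (K0+d) ltac:(lia)) as Eq.
      change (Rabs (@sum_n_m R_AbelianGroup x (S K0) (K0+d)) < 1/2) in HN0.
      rewrite Eq in HN0. change (Rabs (sum_n x (K0 + d) - sum_n x K0) < 1/2) in HN0.
      unfold Sd. apply Rabs_def2 in HN0. lra. }
  assert (inv : forall d, w K1 * (1 - Sd d) <= w (K1 + d)%nat).
  { induction d.
    - unfold Sd. rewrite !Nat.add_0_r. lra.
    - assert (E : Sd (S d) = Sd d + x (K1 + d)%nat).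
      { unfold Sd. rewrite Nat.add_succ_r, sumn_S. unfold K1. simpl. ring. }
      assert (Hxk : 0 <= x (K1 + d)%nat) by (apply Hx; unfold K1; lia).
      pose proof (Sb d). pose proof (Sb (S d)).
      specialize (Hr (K1 + d)%nat ltac:(unfold K1, K0; lia)).
      rewrite Nat.add_succ_r. fold (w (K1 + d)%nat) in Hr. fold (w (S (K1 + d))) in Hr.
      assert (w K1 > 0).
      { unfold w. apply Rmult_lt_0_compat; [apply lt_0_INR; unfold K1; lia | apply Hb]. }
      assert (w K1 * (1 - Sd d) * (1 - x (K1 + d)%nat) <= w (K1 + d)%nat * (1 - x (K1 + d)%nat)).
      { apply Rmult_le_compat_r; lra. }
      rewrite E. assert (0 <= w K1 * Sd d * x (K1 + d)%nat) by (apply Rmult_le_pos; [apply Rmult_le_pos|]; lra). nra. }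
  assert (HwK : w K1 > 0).
  { unfold w. apply Rmult_lt_0_compat; [apply lt_0_INR; unfold K1; lia | apply Hb]. }
  exists (w K1 / 2), K1. split; [lra | split; [unfold K1; lia |]].
  intros N HN. specialize (inv (N - K1)%nat). replace (K1 + (N - K1))%nat with N in inv by lia.
  pose proof (Sb (N - K1)%nat).
  assert (HN0' : 0 < INR N) by (apply lt_0_INR; unfold K1 in HN; lia).
  unfold w in inv.
  apply Rmult_le_reg_l with (INR N); [lra|].
  replace (INR N * (w K1 / 2 / INR N)) with (w K1 / 2) by (field; lra).
  unfold w in *. nra.
Qed.

Lemma pseries (E q : R) : 0 <= E -> 1 < q -> ex_series (fun n => E / Rpower (INR n) q).
Proof.
  intros HE Hq.
  set (f := fun n => E / Rpower (INR n) q).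
  assert (Hpos : forall n, (1 <= n)%nat -> 0 <= f n).
  { intros n Hn. unfold f, Rpower. apply Rdiv_le_0_compat; [lra | apply exp_pos]. }
  assert (Hdec : forall n, (1 <= n)%nat -> f (S n) <= f n).
  { intros n Hn. unfold f. unfold Rdiv. apply Rmult_le_compat_l; [lra|].
    assert (0 < INR n) by (apply lt_0_INR; lia).
    apply Rinv_le_contravar. unfold Rpower; apply exp_pos.
    apply Rle_Rpower_l; [lra | split; [lra | rewrite S_INR; lra]]. }
  set (r := Rpower 2 (1 - q)).
  assert (Hr : 0 < r < 1).
  { split. unfold r, Rpower; apply exp_pos.
    unfold r. assert (Rpower 2 (1-q) < Rpower 2 0) by (apply Rpower_lt; lra). rewrite Rpower_O in H by lra. exact H. }
  assert (Hcond : forall k, 2 ^ k * f (2 ^ k)%nat = E * r ^ k).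
  { intros k. unfold f. rewrite INR_pow2.
    assert (A : 2 ^ k = Rpower 2 (INR k)) by (rewrite Rpower_pow; lra).
    assert (B : r ^ k = Rpower 2 ((1 - q) * INR k)).
    { rewrite <- Rpower_pow by lra. unfold r. rewrite Rpower_mult. reflexivity. }
    rewrite A, B, Rpower_mult.
    replace ((1 - q) * INR k) with (INR k + - (INR k * q)) by ring.
    rewrite Rpower_plus, Rpower_Ropp.
    assert (0 < Rpower 2 (INR k * q)) by (unfold Rpower; apply exp_pos).
    field. lra. }
  apply ex_series_incr_1.
  destruct (bound_of_ex (fun k => r ^ k)) as [Lg HLg].
  { intros k. apply pow_le. lra. }
  { apply ex_series_geom. rewrite Rabs_right; lra. }
  apply ex_of_bound with (L := E * Lg).
  { intros k. apply Hpos. lia. }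
  intros N. rewrite P_sum.
  assert (P f (S N) <= P f (S N + (2 ^ S (S N) - 1 - S N))) by (apply P_mono; auto).
  pose proof (Nat.pow_gt_lin_r 2 (S (S N)) ltac:(lia)).
  replace (S N + (2 ^ S (S N) - 1 - S N))%nat with (2 ^ S (S N) - 1)%nat in H by lia.
  pose proof (cond_up f Hpos Hdec (S N)).
  assert (Eq : forall M, @eq R (sum_n (fun k => 2 ^ k * f (2 ^ k)%nat) M) (E * sum_n (fun k => r ^ k) M)).
  { induction M. rewrite !sumn_O. apply Hcond.
    rewrite !sumn_S, IHM, Hcond. ring. }
  rewrite Eq in H1. specialize (HLg (S N)).
  assert (E * sum_n (fun k => r ^ k) (S N) <= E * Lg) by (apply Rmult_le_compat_l; lra).
  lra.
Qed.

Lemma pow2_ge2 k : (1 <= k)%nat -> (2 <= 2 ^ k)%nat.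
Proof. intros Hk. destruct k; [lia|]. simpl. pose proof (pow2_ge1 k). lia. Qed.

Definition h (n : nat) : R := / INR n.

Lemma harm K : INR (S K) / 2 <= P h (2 ^ S K).
Proof.
  assert (Hp : forall n, (1 <= n)%nat -> 0 <= h n).
  { intros n Hn. unfold h. left. apply Rinv_0_lt_compat, lt_0_INR. lia. }
  assert (Hd : forall n, (1 <= n)%nat -> h (S n) <= h n).
  { intros n Hn. unfold h. apply Rinv_le_contravar. apply lt_0_INR; lia. rewrite S_INR; lra. }
  pose proof (cond_down h Hp Hd K).
  assert (E : forall M, @eq R (sum_n (fun k => 2 ^ k * h (2 ^ S k)%nat) M) (INR (S M) / 2)).
  { assert (T : forall k, 2 ^ k * h (2 ^ S k)%nat = 1 / 2).
    { intros k. unfold h. rewrite INR_pow2. simpl. assert (0 < 2 ^ k) by (apply pow_lt; lra). field. lra. }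
    induction M. rewrite sumn_O, T. simpl. lra.
    rewrite sumn_S, IHM, T, (S_INR (S M)). lra. }
  rewrite E in H. exact H.
Qed.
Theorem corollary2p1p2 (a : nat -> R) (beta p : R) (gamma : nat -> R) :
  (forall n : nat, (1 <= n)%nat -> 0 < a n) ->
  (forall n : nat, (1 <= n)%nat -> a (S n) <= a n) ->
  1 < p ->
  (exists M : R, forall n : nat, (2 <= n)%nat -> Rabs (gamma n) <= M) ->
  (forall n : nat, (2 <= n)%nat ->
     a (2 * n)%nat / a n
     = 1 / 2 - beta / ln (INR n) + gamma n / Rpower (ln (INR n)) p) ->
  (beta > ln 2 / 2 -> series_from1_converges a) /\
  (beta <= ln 2 / 2 -> ~ series_from1_converges a).
Proof.
  intros Hpos Hdec Hp [M HM] Hrat.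
  assert (Hpos' : forall n, (1 <= n)%nat -> 0 <= a n) by (intros n Hn; left; auto).
  set (L2 := ln 2).
  assert (HL2 : 0 < L2) by (unfold L2; rewrite <- ln_1; apply ln_increasing; lra).
  assert (HM0 : 0 <= M) by (specialize (HM 2%nat (le_n 2)); pose proof (Rabs_pos (gamma 2%nat)); lra).
  set (RL := Rpower L2 p).
  assert (HRL : 0 < RL) by (unfold RL, Rpower; apply exp_pos).
  set (G := 2 * M / RL).
  assert (HG : 0 <= G) by (unfold G; apply Rdiv_le_0_compat; lra).
  set (c := 2 * beta / L2).
  set (b := fun k => 2 ^ k * a (2 ^ k)%nat).
  assert (Hb : forall k, 0 < b k).
  { intros k. unfold b. apply Rmult_lt_0_compat. apply pow_lt; lra. apply Hpos, pow2_ge1. }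
  assert (Hkey : forall k, (1 <= k)%nat -> exists g, Rabs g <= G /\
            b (S k) = b k * (1 - c / INR k + g / Rpower (INR k) p)).
  { intros k Hk. exists (2 * gamma (2 ^ k)%nat / RL). split.
    - unfold G, Rdiv. rewrite !Rabs_mult, (Rabs_right 2) by lra.
      rewrite (Rabs_right (/ RL)) by (left; apply Rinv_0_lt_compat; auto).
      apply Rmult_le_compat_r; [left; apply Rinv_0_lt_compat; auto|].
      apply Rmult_le_compat_l; [lra|]. apply HM, pow2_ge2, Hk.
    - set (n := (2 ^ k)%nat).
      assert (Hn : (2 <= n)%nat) by (apply pow2_ge2, Hk).
      pose proof (Hrat n Hn) as R.
      assert (Han : 0 < a n) by (apply Hpos; lia).
      assert (E2 : a (2 * n)%nat = a n * (1 / 2 - beta / ln (INR n) + gamma n / Rpower (ln (INR n)) p)).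
      { rewrite <- R. field. lra. }
      unfold n in E2. rewrite INR_pow2, ln_pow in E2 by lra. fold L2 in E2.
      assert (Hk0 : 0 < INR k) by (apply lt_0_INR; lia).
      rewrite <- Rpower_mult_distr in E2 by lra. fold RL in E2.
      unfold b. change (2 ^ S k)%nat with (2 * 2 ^ k)%nat. rewrite E2. fold n.
      assert (0 < Rpower (INR k) p) by (unfold Rpower; apply exp_pos).
      unfold c. simpl. field. repeat split; lra. }
  split.
  -
    intros Hbeta.
    assert (Hc : 1 < c).
    { unfold c. apply (Rmult_lt_reg_r L2); [lra|].
      replace (2 * beta / L2 * L2) with (2 * beta) by (field; lra). fold L2 in Hbeta. lra. }
    set (s := (1 + c) / 2).
    set (T := G / (c - s)).
    assert (HT : c - s > 0) by (unfold s; lra).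
    destruct (INR_unbounded (exp (T / (p - 1)))) as [K0 HK0].
    assert (Hbs : ex_series b).
    { apply (raabe b s (Nat.max K0 1)); auto. unfold s; lra. lia.
      intros k Hk. destruct (Hkey k ltac:(lia)) as [g [Hg Heq]]. rewrite Heq.
      assert (Hk0 : 0 < INR k) by (apply lt_0_INR; lia).
      set (R1 := Rpower (INR k) (p - 1)).
      assert (HR1 : 0 < R1) by (unfold R1, Rpower; apply exp_pos).
      assert (Esplit : Rpower (INR k) p = INR k * R1).
      { assert (X := Rpower_plus 1 (p - 1) (INR k)). rewrite Rpower_1 in X by lra.
        replace (1 + (p - 1)) with p in X by ring. exact X. }
      assert (Hln : T / (p - 1) <= ln (INR k)).
      { rewrite <- (ln_exp (T / (p - 1))). apply ln_le. apply exp_pos.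
        assert (INR K0 <= INR k) by (apply le_INR; lia). lra. }
      assert (HR1T : T <= R1).
      { unfold R1, Rpower. pose proof (exp_ineq1_le ((p - 1) * ln (INR k))).
        assert (T <= (p - 1) * ln (INR k)).
        { replace T with ((p - 1) * (T / (p - 1))) by (field; lra).
          apply Rmult_le_compat_l; lra. }
        lra. }
      assert (HGR : G * / R1 <= c - s).
      { apply (Rmult_le_reg_r R1); auto. rewrite Rmult_assoc, Rinv_l by lra.
        unfold T in HR1T. apply (Rmult_le_compat_l (c - s)) in HR1T; [|lra].
        replace ((c - s) * (G / (c - s))) with G in HR1T by (field; lra). lra. }
      rewrite Esplit. unfold Rdiv. rewrite Rinv_mult.
      set (u := / INR k). set (w := / R1).
      assert (Hu : 0 < u) by (apply Rinv_0_lt_compat; auto).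
      assert (Hw : 0 < w) by (apply Rinv_0_lt_compat; auto).
      assert (Hg' : g <= G) by (pose proof (Rle_abs g); lra).
      assert (Hgw : g * w <= c - s) by (fold w in HGR; nra).
      assert (Hfin : b k * (1 - s * u) - b k * (1 - c * u + g * (u * w)) = b k * u * (c - s - g * w)) by ring.
      assert (0 <= b k * u * (c - s - g * w)).
      { apply Rmult_le_pos. apply Rmult_le_pos; left; auto. lra. }
      lra. }
    destruct (bound_of_ex b) as [Lb HLb]. intros k; left; auto. exact Hbs.
    unfold series_from1_converges.
    apply ex_of_bound with (L := Lb).
    { intros k. apply Hpos'. lia. }
    intros N. rewrite P_sum.
    assert (P a (S N) <= P a (S N + (2 ^ S N - 1 - S N))) by (apply P_mono; auto).
    pose proof (Nat.pow_gt_lin_r 2 (S N) ltac:(lia)).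
    replace (S N + (2 ^ S N - 1 - S N))%nat with (2 ^ S N - 1)%nat in H by lia.
    pose proof (cond_up a Hpos' Hdec N).
    specialize (HLb N). unfold b in HLb. lra.
  -
    intros Hbeta Hser.
    assert (Hc : c <= 1).
    { unfold c. apply (Rmult_le_reg_r L2); [lra|].
      replace (2 * beta / L2 * L2) with (2 * beta) by (field; lra). fold L2 in Hbeta. lra. }
    set (q := Rmin p 2).
    assert (Hq1 : 1 < q) by (unfold q; apply Rmin_glb_lt; lra).
    assert (Hqp : q <= p) by (unfold q; apply Rmin_l).
    assert (Hq2 : q <= 2) by (unfold q; apply Rmin_r).
    set (E := 1 + 2 * G).
    set (x := fun n => E / Rpower (INR n) q).
    assert (Hx : ex_series x) by (apply pseries; unfold E; lra).
    destruct (gauss_div b x 1 Hb (le_n 1)) as [C [K1 [HC [HK1 Hlow]]]].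
    { intros k Hk. unfold x. apply Rdiv_le_0_compat. unfold E; lra. unfold Rpower; apply exp_pos. }
    { exact Hx. }
    { intros k Hk. destruct (Hkey k Hk) as [g [Hg Heq]]. rewrite Heq.
      set (K' := INR k).
      assert (HK' : 1 <= K') by (unfold K'; apply (le_INR 1); lia).
      set (u := / K'). set (vp := / Rpower K' p). set (vq := / Rpower K' q).
      assert (HKu : K' * u = 1) by (unfold u; field; lra).
      assert (Hu : 0 < u) by (unfold u; apply Rinv_0_lt_compat; lra).
      assert (Hvp : 0 <= vp) by (unfold vp; left; apply Rinv_0_lt_compat; unfold Rpower; apply exp_pos).
      assert (Hvpq : vp <= vq).
      { unfold vp, vq. apply Rinv_le_contravar. unfold Rpower; apply exp_pos. apply Rle_Rpower; lra. }
      assert (Hvq : u * u <= vq).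
      { unfold u, vq. rewrite <- Rinv_mult. apply Rinv_le_contravar. unfold Rpower; apply exp_pos.
        assert (Rpower K' 2 = K' * K').
        { replace 2 with (INR 2) by (simpl; ring). rewrite Rpower_pow by lra. simpl. ring. }
        rewrite <- H. apply Rle_Rpower; lra. }
      assert (HKvq : u <= K' * vq).
      { replace u with (K' * (u * u)) by (rewrite <- Rmult_assoc, HKu; ring).
        apply Rmult_le_compat_l; lra. }
      assert (X2 : 0 <= 2 * K' * vq - (K' + 1) * vp) by nra.
      assert (Id : (K' + 1) * (1 - u - G * vp) - K' * (1 - E * vq)
                   = (1 - K' * u) + (K' * vq - u) + G * (2 * K' * vq - (K' + 1) * vp)) by (unfold E; ring).
      assert (X1 : K' * (1 - E * vq) <= (K' + 1) * (1 - u - G * vp)).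
      { assert (0 <= G * (2 * K' * vq - (K' + 1) * vp)) by (apply Rmult_le_pos; lra). lra. }
      assert (Hg' : - G <= g) by (pose proof (Rle_abs (- g)) as Hab; rewrite Rabs_Ropp in Hab; lra).
      assert (D : 1 - u - G * vp <= 1 - c / K' + g / Rpower K' p).
      { unfold Rdiv. fold u. fold vp. assert (c * u <= u) by nra. assert (- G * vp <= g * vp) by nra. lra. }
      unfold x. fold K'. rewrite S_INR. fold K'. replace (E / Rpower K' q) with (E * vq) by reflexivity. replace (c / K') with (c * u) by reflexivity. replace (g / Rpower K' p) with (g * vp) by reflexivity.
      unfold Rdiv in D. fold u in D. fold vp in D.
      assert (Hbk := Hb k).
      assert (K' * b k * (1 - E * vq) <= b k * ((K' + 1) * (1 - u - G * vp))).
      { replace (K' * b k * (1 - E * vq)) with (b k * (K' * (1 - E * vq))) by ring.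
        apply Rmult_le_compat_l; lra. }
      assert (b k * ((K' + 1) * (1 - u - G * vp)) <= (K' + 1) * (b k * (1 - c * u + g * vp))).
      { replace (b k * ((K' + 1) * (1 - u - G * vp))) with ((K' + 1) * (b k * (1 - u - G * vp))) by ring.
        apply Rmult_le_compat_l; [lra|]. apply Rmult_le_compat_l; lra. }
      lra. }
    destruct (bound_of_ex (fun n => a (S n))) as [La HLa].
    { intros k; apply Hpos'; lia. } { exact Hser. }
    set (Lb := 2 * La + b O).
    assert (Hbb : forall K, sum_n b (S K) <= Lb).
    { intros K. pose proof (cond_down a Hpos' Hdec K).
      assert (Eq : forall m, @eq R (sum_n (fun k => 2 ^ k * a (2 ^ S k)%nat) m) (sum_n (fun k => b (S k)) m / 2)).
      { induction m. rewrite !sumn_O. unfold b. simpl. field.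
        rewrite !sumn_S, IHm. unfold b. simpl. field. }
      rewrite Eq, sum_shift in H.
      pose proof (pow2_ge1 (S K)).
      replace (2 ^ S K)%nat with (S (2 ^ S K - 1)) in H by lia.
      rewrite <- P_sum in H. specialize (HLa (2 ^ S K - 1)%nat). unfold Lb. lra. }
    set (sb := sum_n b K1).
    assert (Hlow2 : forall d, C * (P h (K1 + d) - P h K1) <= sum_n b (K1 + d) - sb).
    { induction d.
      - rewrite Nat.add_0_r. unfold sb. lra.
      - rewrite Nat.add_succ_r, sumn_S. simpl P.
        specialize (Hlow (S (K1 + d)) ltac:(lia)). unfold Rdiv in Hlow. change (h (S (K1 + d))) with (/ INR (S (K1 + d))). lra. }
    destruct (INR_unbounded (2 * ((Lb - sb) / C + P h K1))) as [K2 HK2].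
    set (K := Nat.max K2 K1).
    pose proof (harm K) as HH.
    pose proof (Nat.pow_gt_lin_r 2 (S K) ltac:(lia)) as HN.
    specialize (Hlow2 (2 ^ S K - K1)%nat). replace (K1 + (2 ^ S K - K1))%nat with (2 ^ S K)%nat in Hlow2 by lia.
    assert (INR K2 <= INR (S K)) by (apply le_INR; lia).
    assert (C * ((Lb - sb) / C) = Lb - sb) by (field; lra).
    assert ((Lb - sb) / C < P h (2 ^ S K) - P h K1) by lra.
    assert (Lb - sb < C * (P h (2 ^ S K) - P h K1)).
    { rewrite <- H0. apply Rmult_lt_compat_l; lra. }
    pose proof (pow2_ge1 (S K)).
    specialize (Hbb (2 ^ S K - 1)%nat). replace (S (2 ^ S K - 1)) with (2 ^ S K)%nat in Hbb by lia.
    lra.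
Qed.
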